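(* Let $k,n$ be positive integers and let $$C_{k,n,1}=\inf_{v}\ \sup_{0\neq f\in\ell^2(\mathbb{Z})}\frac{\|\nabla^{k}(v\ast f)\|_{\ell^2(\mathbb{Z})}}{\|f\|_{\ell^2(\mathbb{Z})}},$$ where the infimum is over all $v:\{-n,\dots,n\}\to\mathbb{R}$ with $v(j)=v(-j)$ for all $j$ and $\sum_{j=-n}^{n}v(j)=1$. Then for every $u:\{-n,\dots,n\}\to\mathbb{C}$ with $\sum_{j=-n}^{n}u(j)=1$, $$\sup_{0\neq f\in\ell^2(\mathbb{Z})}\frac{\|\nabla^{k}(u\ast f)\|_{\ell^2(\mathbb{Z})}}{\|f\|_{\ell^2(\mathbb{Z})}}\ \ge\ C_{k,n,1}.$$
   Context: Functions on $\{-n,\dots,n\}$ are regarded as functions on $\mathbb{Z}$ vanishing outside it; $\nabla g(k)=g(k+1)-g(k)$, $\nabla^{k}=\nabla(\nabla^{k-1})$; $(u\ast f)(m)=\sum_ju(j)f(m-j)$. Suprema are over nonzero complex-valued $f\in\ell^2(\mathbb{Z})$. *)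

(* Defs.v *)
From Stdlib Require Import Reals ZArith List.
From Coquelicot Require Import Coquelicot.
Import ListNotations.
Open Scope R_scope.

Definition zrange (n : nat) : list Z :=
  map (fun i => (Z.of_nat i - Z.of_nat n)%Z) (seq 0 (2 * n + 1)).

Definition sumZC (n : nat) (g : Z -> C) : C :=
  fold_right (fun j acc => Cplus (g j) acc) (RtoC 0) (zrange n).
Definition sumZR (n : nat) (g : Z -> R) : R :=
  fold_right (fun j acc => g j + acc) 0 (zrange n).

Definition supported_in {A : Type} (zero : A) (n : nat) (g : Z -> A) : Prop :=
  forall j : Z, (Z.of_nat n < Z.abs j)%Z -> g j = zero.

(* two-sided series  sum_{m in Z} |f m|^2  (folded as m >= 0 and m <= -1) *)
Definition sq_terms (f : Z -> C) (m : nat) : R :=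
  (Cmod (f (Z.of_nat m)))^2 + (Cmod (f (- Z.of_nat m - 1)%Z))^2.

Definition in_l2 (f : Z -> C) : Prop := ex_series (sq_terms f).
Definition l2_normsq (f : Z -> C) : R := Series (sq_terms f).
Definition l2_norm (f : Z -> C) : R := sqrt (l2_normsq f).

Definition nabla (g : Z -> C) : Z -> C := fun m => Cminus (g (m + 1)%Z) (g m).
Definition nabla_iter (k : nat) (g : Z -> C) : Z -> C := Nat.iter k nabla g.

Definition conv (n : nat) (u : Z -> C) (f : Z -> C) : Z -> C :=
  fun m => sumZC n (fun j => Cmult (u j) (f (m - j)%Z)).

Definition opnorm (k n : nat) (u : Z -> C) : Rbar :=
  Lub_Rbar (fun r => exists f : Z -> C,
    in_l2 f /\ f <> (fun _ => RtoC 0) /\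
    r = l2_norm (nabla_iter k (conv n u f)) / l2_norm f).

Definition Cknl (k n : nat) : Rbar :=
  Glb_Rbar (fun r => exists v : Z -> R,
    supported_in 0 n v /\ (forall j, v j = v (- j)%Z) /\ sumZR n v = 1 /\
    opnorm k n (fun j => RtoC (v j)) = Finite r).

(* Main.v *)
Require Import Defs.
From Stdlib Require Import Reals ZArith List Lia Lra FunctionalExtensionality.
From Coquelicot Require Import Coquelicot.
Import ListNotations.
Open Scope R_scope.

Ltac csolve := repeat match goal with c : C |- _ => destruct c end;
  apply injective_projections;
  unfold Cminus, Cdiv; unfold Cconj, Cplus, Cmult, Copp, Cinv, RtoC, Re, Im; simpl; field.

Lemma Cconj_plus (a b : C) : Cconj (Cplus a b) = Cplus (Cconj a) (Cconj b).
Proof. csolve. Qed.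
Lemma Cconj_mult (a b : C) : Cconj (Cmult a b) = Cmult (Cconj a) (Cconj b).
Proof. csolve. Qed.
Lemma Cconj_minus (a b : C) : Cconj (Cminus a b) = Cminus (Cconj a) (Cconj b).
Proof. csolve. Qed.
Lemma Re_plus (a b : C) : Re (Cplus a b) = Re a + Re b.
Proof. destruct a, b; reflexivity. Qed.

Notation FC g := (fun (j : Z) (acc : C) => Cplus (g j) acc).
Notation FR g := (fun (j : Z) (acc : R) => g j + acc).

Lemma foldC_init (g : Z -> C) (x : C) l :
  fold_right (FC g) x l = Cplus (fold_right (FC g) (RtoC 0) l) x.
Proof. induction l as [|a l IH]; simpl. - csolve. - rewrite IH. csolve. Qed.
Lemma foldR_init (g : Z -> R) (x : R) l :
  fold_right (FR g) x l = fold_right (FR g) 0 l + x.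
Proof. induction l as [|a l IH]; simpl. - ring. - rewrite IH. ring. Qed.

Lemma foldC_plus (g h : Z -> C) l :
  fold_right (FC (fun j => Cplus (g j) (h j))) (RtoC 0) l =
  Cplus (fold_right (FC g) (RtoC 0) l) (fold_right (FC h) (RtoC 0) l).
Proof. induction l as [|a l IH]; simpl. - csolve. - rewrite IH. csolve. Qed.
Lemma foldC_scal (c : C) (g : Z -> C) l :
  fold_right (FC (fun j => Cmult c (g j))) (RtoC 0) l =
  Cmult c (fold_right (FC g) (RtoC 0) l).
Proof. induction l as [|a l IH]; simpl. - csolve. - rewrite IH. csolve. Qed.
Lemma foldC_conj (g : Z -> C) l :
  fold_right (FC (fun j => Cconj (g j))) (RtoC 0) l =
  Cconj (fold_right (FC g) (RtoC 0) l).
Proof. induction l as [|a l IH]; simpl. - csolve. - rewrite IH. csolve. Qed.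
Lemma foldC_Re (g : Z -> C) l :
  Re (fold_right (FC g) (RtoC 0) l) = fold_right (FR (fun j => Re (g j))) 0 l.
Proof. induction l as [|a l IH]; cbn [fold_right]. - reflexivity. - rewrite Re_plus, IH. reflexivity. Qed.
Lemma foldR_plus (g h : Z -> R) l :
  fold_right (FR (fun j => g j + h j)) 0 l =
  fold_right (FR g) 0 l + fold_right (FR h) 0 l.
Proof. induction l as [|a l IH]; simpl. - ring. - rewrite IH. ring. Qed.
Lemma foldR_scal (c : R) (g : Z -> R) l :
  fold_right (FR (fun j => c * g j)) 0 l = c * fold_right (FR g) 0 l.
Proof. induction l as [|a l IH]; simpl. - ring. - rewrite IH. ring. Qed.

Lemma zrange_S n : zrange (S n) = (- Z.of_nat (S n))%Z :: zrange n ++ (Z.of_nat (S n) :: nil).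
Proof.
  unfold zrange.
  replace (2 * S n + 1)%nat with (S (S (2*n+1))) by lia.
  change (seq 0 (S (S (2*n+1)))) with (0 :: seq 1 (S (2*n+1)))%nat.
  rewrite seq_S, <- seq_shift. cbn [map]. rewrite map_app, map_map. cbn [map].
  f_equal; try lia. f_equal; [apply map_ext; intros; lia | f_equal; lia].
Qed.

Lemma sumZC_S n g : sumZC (S n) g =
  Cplus (g (- Z.of_nat (S n))%Z) (Cplus (sumZC n g) (g (Z.of_nat (S n)))).
Proof.
  unfold sumZC. rewrite zrange_S. cbn [fold_right]. rewrite fold_right_app.
  cbn [fold_right]. rewrite foldC_init. f_equal. f_equal. csolve.
Qed.
Lemma sumZR_S n g : sumZR (S n) g =
  g (- Z.of_nat (S n))%Z + (sumZR n g + g (Z.of_nat (S n))).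
Proof.
  unfold sumZR. rewrite zrange_S. cbn [fold_right]. rewrite fold_right_app.
  cbn [fold_right]. rewrite foldR_init. ring.
Qed.

Lemma sumZC_refl n g : sumZC n (fun j => g (- j)%Z) = sumZC n g.
Proof.
  induction n as [|n IH].
  - reflexivity.
  - rewrite !sumZC_S, IH, Z.opp_involutive. csolve.
Qed.
Lemma sumZR_refl n g : sumZR n (fun j => g (- j)%Z) = sumZR n g.
Proof.
  induction n as [|n IH].
  - reflexivity.
  - rewrite !sumZR_S, IH, Z.opp_involutive. ring.
Qed.

Lemma sumZC_ext n g h : (forall j, g j = h j) -> sumZC n g = sumZC n h.
Proof. intros H. f_equal. apply functional_extensionality. exact H. Qed.

Lemma conv_ext n w1 w2 f : (forall j, w1 j = w2 j) -> conv n w1 f = conv n w2 f.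
Proof. intros H. f_equal. apply functional_extensionality. exact H. Qed.

Lemma conv_plus n w1 w2 f m :
  conv n (fun j => Cplus (w1 j) (w2 j)) f m = Cplus (conv n w1 f m) (conv n w2 f m).
Proof.
  unfold conv, sumZC. rewrite <- foldC_plus. f_equal.
  apply functional_extensionality; intro j. apply functional_extensionality; intro a.
  f_equal. csolve.
Qed.
Lemma conv_scal n c w f m :
  conv n (fun j => Cmult c (w j)) f m = Cmult c (conv n w f m).
Proof.
  unfold conv, sumZC. rewrite <- foldC_scal. f_equal.
  apply functional_extensionality; intro j. apply functional_extensionality; intro a.
  f_equal. csolve.
Qed.
Lemma conv_conj n w f m :
  conv n (fun j => Cconj (w j)) f m = Cconj (conv n w (fun x => Cconj (f x)) m).
Proof.
  unfold conv, sumZC. rewrite <- foldC_conj. f_equal.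
  apply functional_extensionality; intro j. apply functional_extensionality; intro a.
  f_equal. rewrite Cconj_mult, Cconj_conj. reflexivity.
Qed.
Lemma conv_refl n w f m :
  conv n (fun j => w (- j)%Z) f m = conv n w (fun x => f (- x)%Z) (- m)%Z.
Proof.
  unfold conv. rewrite <- (sumZC_refl n (fun j => Cmult (w (- j)%Z) (f (m - j)%Z))).
  apply sumZC_ext. intros j. rewrite Z.opp_involutive. f_equal. f_equal. lia.
Qed.

Lemma nabla_iter_S k g : nabla_iter (S k) g = nabla (nabla_iter k g).
Proof. reflexivity. Qed.

Lemma N_plus k g h : nabla_iter k (fun x => Cplus (g x) (h x)) =
  fun x => Cplus (nabla_iter k g x) (nabla_iter k h x).
Proof.
  induction k as [|k IH]. - reflexivity.
  - rewrite !nabla_iter_S, IH. unfold nabla. apply functional_extensionality; intro x. csolve.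
Qed.
Lemma N_scal k c g : nabla_iter k (fun x => Cmult c (g x)) =
  fun x => Cmult c (nabla_iter k g x).
Proof.
  induction k as [|k IH]. - reflexivity.
  - rewrite !nabla_iter_S, IH. unfold nabla. apply functional_extensionality; intro x. csolve.
Qed.
Lemma N_conj k g : nabla_iter k (fun x => Cconj (g x)) =
  fun x => Cconj (nabla_iter k g x).
Proof.
  induction k as [|k IH]. - reflexivity.
  - rewrite !nabla_iter_S, IH. unfold nabla. apply functional_extensionality; intro x. csolve.
Qed.
Lemma N_refl k g : nabla_iter k (fun x => g (- x)%Z) =
  fun x => Cmult (RtoC ((-1) ^ k)) (nabla_iter k g (- x - Z.of_nat k)%Z).
Proof.
  induction k as [|k IH].
  - apply functional_extensionality; intro x. simpl. rewrite Z.sub_0_r. csolve.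
  - rewrite !nabla_iter_S, IH. unfold nabla. apply functional_extensionality; intro x.
    replace (- (x + 1) - Z.of_nat k)%Z with (- x - Z.of_nat (S k))%Z by lia.
    replace (- x - Z.of_nat (S k) + 1)%Z with (- x - Z.of_nat k)%Z by lia.
    generalize (nabla_iter k g (- x - Z.of_nat (S k))%Z) (nabla_iter k g (- x - Z.of_nat k)%Z).
    intros. simpl pow. generalize ((-1)^k). intros. csolve.
Qed.

Lemma aux2 t p q : 0 <= t -> t <= p + q -> 0 <= p -> 0 <= q -> t ^ 2 <= 2 * p ^ 2 + 2 * q ^ 2.
Proof. intros. assert (t * t <= (p+q)*(p+q)) by (apply Rmult_le_compat; lra).
pose proof (Rle_0_sqr (p-q)). unfold Rsqr in *. simpl. lra. Qed.

Lemma sq_nonneg' f m : 0 <= sq_terms f m.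
Proof. unfold sq_terms. pose proof (Cmod_ge_0 (f (Z.of_nat m))). pose proof (Cmod_ge_0 (f (- Z.of_nat m - 1)%Z)). nra. Qed.

Lemma ex_series_R_le (a b : nat -> R) : (forall n, 0 <= a n <= b n) -> ex_series b -> ex_series a.
Proof.
  intros H Hb. apply (ex_series_le a b); [|exact Hb].
  intros n. change (norm (a n)) with (Rabs (a n)). rewrite Rabs_pos_eq; apply H.
Qed.

Lemma sq_ext (g h : Z -> C) : (forall x, Cmod (h x) = Cmod (g x)) -> sq_terms h = sq_terms g.
Proof. intros H. apply functional_extensionality; intro m. unfold sq_terms. rewrite !H. reflexivity. Qed.

Lemma sq_R' g : sq_terms (fun x => g (- x - 1)%Z) = sq_terms g.
Proof.
  apply functional_extensionality; intro m. unfold sq_terms.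
  replace (- (- Z.of_nat m - 1) - 1)%Z with (Z.of_nat m) by lia. ring.
Qed.

Lemma shift1 g L : is_series (sq_terms g) L -> is_series (sq_terms (fun x => g (x + 1)%Z)) L.
Proof.
  intros HL.
  set (a := fun n : nat => Cmod (g (Z.of_nat n)) ^ 2).
  set (b := fun n : nat => Cmod (g (- Z.of_nat n - 1)%Z) ^ 2).
  assert (Ea : ex_series a).
  { apply (ex_series_R_le a (sq_terms g)); [|exists L; exact HL].
    intros n. unfold a, sq_terms. pose proof (Cmod_ge_0 (g (Z.of_nat n))).
    pose proof (Cmod_ge_0 (g (- Z.of_nat n - 1)%Z)). nra. }
  assert (Eb : ex_series b).
  { apply (ex_series_R_le b (sq_terms g)); [|exists L; exact HL].
    intros n. unfold b, sq_terms. pose proof (Cmod_ge_0 (g (Z.of_nat n))).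
    pose proof (Cmod_ge_0 (g (- Z.of_nat n - 1)%Z)). nra. }
  destruct Ea as [A HA]. destruct Eb as [B HB]. change R in A, B. change R in L.
  assert (HAB : L = A + B).
  { apply is_series_unique in HL. rewrite <- HL.
    assert (H := is_series_plus _ _ _ _ HA HB). apply is_series_unique in H. exact H. }
  set (b' := fun n : nat => match n with O => a O | S p => b p end).
  assert (H1 : is_series (fun n => a (S n)) (A - a O)).
  { apply is_series_incr_1. match goal with |- is_series _ ?l => replace l with A; [exact HA|] end.
    unfold plus; simpl. ring. }
  assert (H2 : is_series b' (B + a O)).
  { apply is_series_decr_1. match goal with |- is_series _ ?l => replace l with B; [exact HB|] end.
    unfold plus, opp; simpl. unfold b'. ring. }
  assert (H3 := is_series_plus _ _ _ _ H1 H2).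
  replace L with (plus (A - a O) (B + a O)) by (unfold plus; simpl; lra).
  revert H3. apply is_series_ext.
  intros n. unfold plus; simpl. unfold sq_terms, a, b', b.
  replace (Z.of_nat (S n)) with (Z.of_nat n + 1)%Z by lia.
  destruct n as [|p].
  - replace (- Z.of_nat 0 - 1 + 1)%Z with (Z.of_nat 0) by lia. reflexivity.
  - replace (- Z.of_nat (S p) - 1 + 1)%Z with (- Z.of_nat p - 1)%Z by lia. reflexivity.
Qed.

Lemma shift1_iff g L : is_series (sq_terms g) L <-> is_series (sq_terms (fun x => g (x + 1)%Z)) L.
Proof.
  split; [apply shift1|]. intros H.
  rewrite <- (sq_R' (fun x => g (x + 1)%Z)) in H.
  apply shift1 in H.
  rewrite <- sq_R'.
  replace (fun x => g (- x - 1)%Z) with (fun x => g (- (x + 1) - 1 + 1)%Z); [exact H|].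
  apply functional_extensionality; intro x. f_equal. lia.
Qed.

Lemma shiftN_iff (m : nat) g L : is_series (sq_terms g) L <-> is_series (sq_terms (fun x => g (x + Z.of_nat m)%Z)) L.
Proof.
  revert g. induction m as [|m IH]; intros g.
  - replace (fun x => g (x + Z.of_nat 0)%Z) with g; [tauto|].
    apply functional_extensionality; intro x. f_equal. lia.
  - rewrite (IH g). rewrite shift1_iff.
    replace (fun x => g (x + 1 + Z.of_nat m)%Z) with (fun x => g (x + Z.of_nat (S m))%Z); [tauto|].
    apply functional_extensionality; intro x. f_equal. lia.
Qed.

Lemma shiftZ_iff (z : Z) g L : is_series (sq_terms g) L <-> is_series (sq_terms (fun x => g (x + z)%Z)) L.
Proof.
  destruct (Z_le_gt_dec 0 z) as [Hz|Hz].
  - replace z with (Z.of_nat (Z.to_nat z)) by lia. apply shiftN_iff.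
  - set (h := fun x => g (x + z)%Z).
    rewrite (shiftN_iff (Z.to_nat (- z)) h).
    replace (fun x => h (x + Z.of_nat (Z.to_nat (- z)))%Z) with g; [tauto|].
    apply functional_extensionality; intro x. unfold h. f_equal. lia.
Qed.

Lemma reflZ_iff (a : Z) g L : is_series (sq_terms g) L <-> is_series (sq_terms (fun x => g (- x + a)%Z)) L.
Proof.
  rewrite <- (sq_R' g). rewrite (shiftZ_iff (- a - 1) (fun x => g (- x - 1)%Z)).
  replace (fun x => g (- (x + (- a - 1)) - 1)%Z) with (fun x => g (- x + a)%Z); [tauto|].
  apply functional_extensionality; intro x. f_equal. lia.
Qed.

Lemma l2_transfer g h : (forall L, is_series (sq_terms g) L -> is_series (sq_terms h) L) ->
  in_l2 g -> in_l2 h /\ l2_normsq h = l2_normsq g.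
Proof.
  intros H [L HL]. assert (Hh := H L HL). split; [exists L; exact Hh|].
  unfold l2_normsq. rewrite (is_series_unique _ _ Hh), (is_series_unique _ _ HL). reflexivity.
Qed.

Lemma l2_shift z g : in_l2 g -> in_l2 (fun x => g (x + z)%Z).
Proof. intros H. apply (l2_transfer g); [|exact H]. intros L. apply shiftZ_iff. Qed.

Lemma l2_refl a g : in_l2 g -> in_l2 (fun x => g (- x + a)%Z) /\
   l2_normsq (fun x => g (- x + a)%Z) = l2_normsq g.
Proof. intros H. apply (l2_transfer g); [|exact H]. intros L. apply reflZ_iff. Qed.

Lemma l2_comb h g1 g2 : (forall x, Cmod (h x) <= Cmod (g1 x) + Cmod (g2 x)) ->
  in_l2 g1 -> in_l2 g2 -> in_l2 h.
Proof.
  intros H H1 H2. unfold in_l2.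
  apply (ex_series_R_le _ (fun n => 2 * sq_terms g1 n + 2 * sq_terms g2 n)).
  - intros n. split; [apply sq_nonneg'|]. unfold sq_terms.
    assert (K : forall x, Cmod (h x) ^ 2 <= 2 * Cmod (g1 x) ^ 2 + 2 * Cmod (g2 x) ^ 2).
    { intros x. apply aux2; auto using Cmod_ge_0. }
    pose proof (K (Z.of_nat n)). pose proof (K (- Z.of_nat n - 1)%Z). lra.
  - exact (ex_series_plus _ _ (ex_series_scal_l _ _ H1) (ex_series_scal_l _ _ H2)).
Qed.

Lemma l2_scal c g : in_l2 g -> in_l2 (fun x => Cmult c (g x)).
Proof.
  intros H. unfold in_l2.
  apply (ex_series_R_le _ (fun n => Cmod c ^ 2 * sq_terms g n)).
  - intros n. split; [apply sq_nonneg'|]. unfold sq_terms. rewrite !Cmod_mult. lra.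
  - exact (ex_series_scal_l _ _ H).
Qed.

Lemma l2_zero : in_l2 (fun _ => RtoC 0).
Proof.
  unfold in_l2. apply (ex_series_R_le _ (fun n => (1/2) ^ n)).
  - intros n. split; [apply sq_nonneg'|]. unfold sq_terms. rewrite Cmod_0.
    pose proof (pow_le (1/2) n). lra.
  - apply ex_series_geom. rewrite Rabs_pos_eq; lra.
Qed.

Lemma l2_conv n u f : in_l2 f -> in_l2 (conv n u f).
Proof.
  intros Hf. unfold conv, sumZC. generalize (zrange n). intros l.
  induction l as [|a l IH].
  - exact l2_zero.
  - cbn [fold_right].
    eapply (l2_comb _ (fun m => Cmult (u a) (f (m - a)%Z))); [intros; apply Cmod_triangle| |exact IH].
    apply l2_scal. exact (l2_shift (- a) f Hf).
Qed.

Lemma l2_nabla k g : in_l2 g -> in_l2 (nabla_iter k g).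
Proof.
  intros Hg. induction k as [|k IH]; [exact Hg|].
  rewrite nabla_iter_S. unfold nabla.
  apply (l2_comb _ (fun m => nabla_iter k g (m + 1)%Z) (nabla_iter k g)); [| apply l2_shift; exact IH | exact IH].
  intros x. unfold Cminus. eapply Rle_trans; [apply Cmod_triangle|]. rewrite Cmod_opp. lra.
Qed.


Lemma aux4 t x1 x2 x3 x4 : 0 <= t -> t <= x1 + x2 + x3 + x4 ->
  (/4 * t) ^ 2 <= /4 * (x1 ^ 2 + x2 ^ 2 + x3 ^ 2 + x4 ^ 2).
Proof.
  intros H0 H. assert (t * t <= (x1+x2+x3+x4)*(x1+x2+x3+x4)) by (apply Rmult_le_compat; lra).
  pose proof (Rle_0_sqr (x1-x2)). pose proof (Rle_0_sqr (x1-x3)). pose proof (Rle_0_sqr (x1-x4)).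
  pose proof (Rle_0_sqr (x2-x3)). pose proof (Rle_0_sqr (x2-x4)). pose proof (Rle_0_sqr (x3-x4)).
  unfold Rsqr in *. simpl. lra.
Qed.

Lemma cmod4 (a b c d : C) :
  Cmod (Cmult (RtoC (/4)) (Cplus (Cplus (Cplus a b) c) d)) ^ 2
  <= /4 * (Cmod a ^ 2 + Cmod b ^ 2 + Cmod c ^ 2 + Cmod d ^ 2).
Proof.
  rewrite Cmod_mult, Cmod_R, (Rabs_pos_eq (/4)) by lra.
  apply aux4; [apply Cmod_ge_0|].
  pose proof (Cmod_triangle (Cplus (Cplus a b) c) d).
  pose proof (Cmod_triangle (Cplus a b) c). pose proof (Cmod_triangle a b). lra.
Qed.

Lemma ratio_bound (M Nf Q1 Q2 Q3 Q4 Qv : R) :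
  sqrt Q1 / sqrt Nf <= M -> sqrt Q2 / sqrt Nf <= M -> sqrt Q3 / sqrt Nf <= M ->
  sqrt Q4 / sqrt Nf <= M ->
  Qv <= /4 * (Q1 + Q2 + Q3 + Q4) -> sqrt Qv / sqrt Nf <= M.
Proof.
  intros H1 H2 H3 H4 Hv.
  set (s := sqrt Nf) in *. assert (Hs : 0 <= s) by apply sqrt_pos.
  assert (HM : 0 <= M).
  { eapply Rle_trans; [|exact H1]. unfold Rdiv. apply Rmult_le_pos; [apply sqrt_pos|].
    destruct (Req_dec s 0) as [E|E]; [rewrite E, Rinv_0; lra|].
    apply Rlt_le, Rinv_0_lt_compat; lra. }
  destruct (Req_dec s 0) as [E|E].
  - rewrite E. unfold Rdiv. rewrite Rinv_0, Rmult_0_r. exact HM.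
  - assert (Hs' : 0 < s) by lra.
    assert (K : forall Q, sqrt Q / s <= M -> Q <= (M * s) ^ 2).
    { intros Q HQ. destruct (Rle_lt_dec Q 0) as [Hq|Hq].
      - pose proof (pow2_ge_0 (M * s)). lra.
      - assert (HQ' : sqrt Q <= M * s).
        { replace (sqrt Q) with (sqrt Q / s * s) by (field; lra).
          apply Rmult_le_compat_r; lra. }
        rewrite <- (sqrt_sqrt Q) by lra. simpl. rewrite Rmult_1_r.
        apply Rmult_le_compat; try apply sqrt_pos; exact HQ'. }
    apply K in H1. apply K in H2. apply K in H3. apply K in H4.
    assert (HQv : sqrt Qv <= M * s).
    { rewrite <- (sqrt_pow2 (M * s)) by (apply Rmult_le_pos; lra).
      apply sqrt_le_1_alt. lra. }
    replace M with (M * s / s) by (field; lra).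
    unfold Rdiv. apply Rmult_le_compat_r; [apply Rlt_le, Rinv_0_lt_compat; lra| exact HQv].
Qed.

Lemma v_decomp (a b : C) : RtoC ((Re a + Re b) / 2) =
  Cmult (RtoC (/4)) (Cplus (Cplus (Cplus a (Cconj a)) b) (Cconj b)).
Proof. csolve. Qed.

Lemma exR_plus (a b : nat -> R) : ex_series a -> ex_series b -> ex_series (fun n => a n + b n).
Proof. intros. exact (ex_series_plus _ _ H H0). Qed.
Lemma exR_scal (c : R) (a : nat -> R) : ex_series a -> ex_series (fun n => c * a n).
Proof. intros. exact (ex_series_scal_l _ _ H). Qed.

Lemma l2_T k n u f : in_l2 f -> in_l2 (nabla_iter k (conv n u f)).
Proof. intros. apply l2_nabla, l2_conv; auto. Qed.

Lemma Cconj_0 : Cconj (RtoC 0) = RtoC 0.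
Proof. csolve. Qed.

Lemma main_bound k n u M :
  (forall g, in_l2 g -> g <> (fun _ => RtoC 0) ->
     l2_norm (nabla_iter k (conv n u g)) / l2_norm g <= M) ->
  forall f, in_l2 f -> f <> (fun _ => RtoC 0) ->
  l2_norm (nabla_iter k (conv n (fun j => RtoC ((Re (u j) + Re (u (- j)%Z)) / 2)) f)) / l2_norm f <= M.
Proof.
  intros HU f Hf Hf0.
  set (cc := fun y => Cconj (f y)).
  set (rf := fun y => f (- y)%Z).
  set (rcc := fun y => cc (- y)%Z).
  set (G1 := nabla_iter k (conv n u f)).
  set (G2 := nabla_iter k (conv n u cc)).
  set (G3 := nabla_iter k (conv n u rf)).
  set (G4 := nabla_iter k (conv n u rcc)).
  set (A2 := nabla_iter k (conv n (fun j => Cconj (u j)) f)).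
  set (A3 := nabla_iter k (conv n (fun j => u (- j)%Z) f)).
  set (A4 := nabla_iter k (conv n (fun j => Cconj (u (- j)%Z)) f)).
  assert (HT : nabla_iter k (conv n (fun j => RtoC ((Re (u j) + Re (u (- j)%Z)) / 2)) f) =
     fun x => Cmult (RtoC (/4)) (Cplus (Cplus (Cplus (G1 x) (A2 x)) (A3 x)) (A4 x))).
  { rewrite (conv_ext n _ (fun j => Cmult (RtoC (/4)) (Cplus (Cplus (Cplus (u j) (Cconj (u j))) (u (- j)%Z)) (Cconj (u (- j)%Z))))) by (intros; apply v_decomp).
    replace (conv n (fun j => Cmult (RtoC (/4)) (Cplus (Cplus (Cplus (u j) (Cconj (u j))) (u (- j)%Z)) (Cconj (u (- j)%Z)))) f)
      with (fun m => Cmult (RtoC (/4)) (Cplus (Cplus (Cplus (conv n u f m) (conv n (fun j => Cconj (u j)) f m))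
               (conv n (fun j => u (- j)%Z) f m)) (conv n (fun j => Cconj (u (- j)%Z)) f m))).
    2: { apply functional_extensionality; intro m. rewrite conv_scal, !conv_plus. reflexivity. }
    rewrite N_scal, !N_plus. reflexivity. }
  assert (HA2 : A2 = fun x => Cconj (G2 x)).
  { unfold A2, G2.
    replace (conv n (fun j => Cconj (u j)) f) with (fun m => Cconj (conv n u cc m))
      by (apply functional_extensionality; intro m; symmetry; apply conv_conj).
    rewrite N_conj. reflexivity. }
  assert (HA3 : A3 = fun x => Cmult (RtoC ((-1) ^ k)) (G3 (- x - Z.of_nat k)%Z)).
  { unfold A3, G3.
    replace (conv n (fun j => u (- j)%Z) f) with (fun m => conv n u rf (- m)%Z)
      by (apply functional_extensionality; intro m; symmetry; apply conv_refl).
    rewrite N_refl. reflexivity. }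
  assert (HA4 : A4 = fun x => Cconj (Cmult (RtoC ((-1) ^ k)) (G4 (- x - Z.of_nat k)%Z))).
  { unfold A4, G4.
    replace (conv n (fun j => Cconj (u (- j)%Z)) f) with (fun m => Cconj (conv n u rcc (- m)%Z)).
    2: { apply functional_extensionality; intro m. symmetry.
         rewrite (conv_conj n (fun j => u (- j)%Z) f m). f_equal. unfold rcc, cc. first [apply conv_refl | symmetry; apply conv_refl]. }
    rewrite N_conj, N_refl. reflexivity. }
  assert (HC2 : forall x, Cmod (A2 x) = Cmod (G2 x)).
  { intros x. rewrite HA2. apply Cmod_conj. }
  assert (HC3 : forall x, Cmod (A3 x) = Cmod ((fun y => G3 (- y + - Z.of_nat k)%Z) x)).
  { intros x. rewrite HA3. cbv beta. rewrite Cmod_mult, Cmod_R, pow_1_abs, Rmult_1_l.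
    first [reflexivity | f_equal; f_equal; lia]. }
  assert (HC4 : forall x, Cmod (A4 x) = Cmod ((fun y => G4 (- y + - Z.of_nat k)%Z) x)).
  { intros x. rewrite HA4. cbv beta. rewrite Cmod_conj, Cmod_mult, Cmod_R, pow_1_abs, Rmult_1_l.
    first [reflexivity | f_equal; f_equal; lia]. }
  assert (Hcc : in_l2 cc /\ l2_normsq cc = l2_normsq f).
  { assert (E : sq_terms cc = sq_terms f) by (apply sq_ext; intros; apply Cmod_conj).
    unfold in_l2, l2_normsq. rewrite E. split; [exact Hf|reflexivity]. }
  assert (Hrf : in_l2 rf /\ l2_normsq rf = l2_normsq f).
  { replace rf with (fun x => f (- x + 0)%Z) by (apply functional_extensionality; intro x; unfold rf; f_equal; lia).
    apply l2_refl. exact Hf. }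
  assert (Hrcc : in_l2 rcc /\ l2_normsq rcc = l2_normsq f).
  { replace rcc with (fun x => cc (- x + 0)%Z) by (apply functional_extensionality; intro x; unfold rcc; f_equal; lia).
    destruct (l2_refl 0 cc (proj1 Hcc)) as [H1 H2]. split; [exact H1|]. rewrite H2. apply Hcc. }
  assert (Hcc0 : cc <> (fun _ => RtoC 0)).
  { intros E. apply Hf0. apply functional_extensionality; intro x.
    assert (E' := f_equal (fun g => g x) E). cbv beta in E'. unfold cc in E'.
    rewrite <- (Cconj_conj (f x)), E'. apply Cconj_0. }
  assert (Hrf0 : rf <> (fun _ => RtoC 0)).
  { intros E. apply Hf0. apply functional_extensionality; intro x.
    assert (E' := f_equal (fun g => g (- x)%Z) E). cbv beta in E'. unfold rf in E'.
    rewrite Z.opp_involutive in E'. exact E'. }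
  assert (Hrcc0 : rcc <> (fun _ => RtoC 0)).
  { intros E. apply Hcc0. apply functional_extensionality; intro x.
    assert (E' := f_equal (fun g => g (- x)%Z) E). cbv beta in E'. unfold rcc in E'.
    rewrite Z.opp_involutive in E'. exact E'. }
  assert (HG1 : in_l2 G1) by (apply l2_T; exact Hf).
  assert (HG2 : in_l2 G2) by (apply l2_T; apply Hcc).
  assert (HG3 : in_l2 G3) by (apply l2_T; apply Hrf).
  assert (HG4 : in_l2 G4) by (apply l2_T; apply Hrcc).
  assert (E2 : sq_terms A2 = sq_terms G2) by (apply sq_ext; exact HC2).
  assert (E3 : sq_terms A3 = sq_terms (fun y => G3 (- y + - Z.of_nat k)%Z)) by (apply sq_ext; exact HC3).
  assert (E4 : sq_terms A4 = sq_terms (fun y => G4 (- y + - Z.of_nat k)%Z)) by (apply sq_ext; exact HC4).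
  destruct (l2_refl (- Z.of_nat k) G3 HG3) as [HG3' EG3].
  destruct (l2_refl (- Z.of_nat k) G4 HG4) as [HG4' EG4].
  assert (HA2l : in_l2 A2) by (unfold in_l2; rewrite E2; exact HG2).
  assert (HA3l : in_l2 A3) by (unfold in_l2; rewrite E3; exact HG3').
  assert (HA4l : in_l2 A4) by (unfold in_l2; rewrite E4; exact HG4').
  assert (Hv : l2_normsq (nabla_iter k (conv n (fun j => RtoC ((Re (u j) + Re (u (- j)%Z)) / 2)) f))
     <= /4 * (l2_normsq G1 + l2_normsq G2 + l2_normsq G3 + l2_normsq G4)).
  { unfold l2_normsq at 1. rewrite HT.
    eapply Rle_trans.
    { apply (Series_le _ (fun m => /4 * (sq_terms G1 m + sq_terms A2 m + sq_terms A3 m + sq_terms A4 m))).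
      - intros m. split; [apply sq_nonneg'|]. unfold sq_terms. cbv beta.
        pose proof (cmod4 (G1 (Z.of_nat m)) (A2 (Z.of_nat m)) (A3 (Z.of_nat m)) (A4 (Z.of_nat m))).
        pose proof (cmod4 (G1 (- Z.of_nat m - 1)%Z) (A2 (- Z.of_nat m - 1)%Z) (A3 (- Z.of_nat m - 1)%Z) (A4 (- Z.of_nat m - 1)%Z)).
        lra.
      - apply exR_scal. exact (exR_plus _ _ (exR_plus _ _ (exR_plus _ _ HG1 HA2l) HA3l) HA4l). }
    rewrite Series_scal_l. rewrite (Series_plus _ _ (exR_plus _ _ (exR_plus _ _ HG1 HA2l) HA3l) HA4l).
    rewrite (Series_plus _ _ (exR_plus _ _ HG1 HA2l) HA3l).
    rewrite (Series_plus _ _ HG1 HA2l).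
    right. f_equal.
    change (Series (sq_terms A2)) with (l2_normsq A2).
    change (Series (sq_terms A3)) with (l2_normsq A3).
    change (Series (sq_terms A4)) with (l2_normsq A4).
    change (Series (sq_terms G1)) with (l2_normsq G1).
    unfold l2_normsq at 2 3 4. rewrite E2, E3, E4.
    fold (l2_normsq (fun y => G3 (- y + - Z.of_nat k)%Z)) (l2_normsq (fun y => G4 (- y + - Z.of_nat k)%Z)).
    rewrite EG3, EG4. reflexivity. }
  unfold l2_norm.
  apply (ratio_bound M _ (l2_normsq G1) (l2_normsq G2) (l2_normsq G3) (l2_normsq G4)); [| | | |exact Hv].
  - exact (HU f Hf Hf0).
  - pose proof (HU cc (proj1 Hcc) Hcc0) as H. unfold l2_norm in H. rewrite (proj2 Hcc) in H. exact H.
  - pose proof (HU rf (proj1 Hrf) Hrf0) as H. unfold l2_norm in H. rewrite (proj2 Hrf) in H. exact H.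
  - pose proof (HU rcc (proj1 Hrcc) Hrcc0) as H. unfold l2_norm in H. rewrite (proj2 Hrcc) in H. exact H.
Qed.

Lemma delta_l2 : exists f : Z -> C, in_l2 f /\ f <> (fun _ => RtoC 0).
Proof.
  exists (fun x => if Z.eq_dec x 0 then RtoC 1 else RtoC 0). split.
  - unfold in_l2. apply (ex_series_R_le _ (fun n => (1/2) ^ n)).
    + intros m. split; [apply sq_nonneg'|]. unfold sq_terms.
      destruct (Z.eq_dec (- Z.of_nat m - 1) 0) as [e|e]; [lia|].
      destruct (Z.eq_dec (Z.of_nat m) 0) as [e'|e'].
      * assert (m = 0%nat) by lia. subst. rewrite Cmod_1, Cmod_0. simpl. lra.
      * rewrite Cmod_0. pose proof (pow_le (1/2) m). simpl. lra.
    + apply ex_series_geom. rewrite Rabs_pos_eq; lra.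
  - intros E. assert (E' := f_equal (fun g => g 0%Z) E). cbv beta in E'.
    destruct (Z.eq_dec 0 0) as [_|n0]; [|congruence].
    injection E' as E1. lra.
Qed.

Theorem lemma5p1 (k n : nat) (hk : (0 < k)%nat) (hn : (0 < n)%nat)
  (u : Z -> C) (hu : supported_in (RtoC 0) n u) (hsum : sumZC n u = RtoC 1) :
  Rbar_le (Cknl k n) (opnorm k n u).
Proof.
  unfold Cknl.
  destruct (Glb_Rbar_correct (fun r => exists v : Z -> R,
    supported_in 0 n v /\ (forall j, v j = v (- j)%Z) /\ sumZR n v = 1 /\
    opnorm k n (fun j => RtoC (v j)) = Finite r)) as [Hlb _].
  destruct delta_l2 as [d [Hd Hd0]].
  assert (HubU : forall g, in_l2 g -> g <> (fun _ => RtoC 0) ->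
    Rbar_le (l2_norm (nabla_iter k (conv n u g)) / l2_norm g) (opnorm k n u)).
  { intros g Hg Hg0. unfold opnorm. apply (proj1 (Lub_Rbar_correct _)). exists g. auto. }
  revert HubU. destruct (opnorm k n u) as [M| |] eqn:HM; intros HubU.
  2: { destruct (Glb_Rbar _); simpl; trivial. }
  2: { specialize (HubU d Hd Hd0). simpl in HubU. contradiction. }
  set (vR := fun j => (Re (u j) + Re (u (- j)%Z)) / 2).
  assert (HubV := main_bound k n u M HubU).
  assert (Hle : Rbar_le (opnorm k n (fun j => RtoC (vR j))) (Finite M)).
  { unfold opnorm. apply (proj2 (Lub_Rbar_correct _)). intros r [f [Hf [Hf0 ->]]].
    simpl. apply HubV; assumption. }
  assert (Hge : Rbar_le (l2_norm (nabla_iter k (conv n (fun j => RtoC (vR j)) d)) / l2_norm d)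
                  (opnorm k n (fun j => RtoC (vR j)))).
  { unfold opnorm. apply (proj1 (Lub_Rbar_correct _)). exists d. auto. }
  revert Hle Hge. destruct (opnorm k n (fun j => RtoC (vR j))) as [r| |] eqn:Hr; intros Hle Hge;
    simpl in Hle, Hge; try contradiction.
  apply Rbar_le_trans with (Finite r); [|exact Hle].
  apply Hlb. exists vR. split; [|split; [|split]].
  - intros j Hj. unfold vR. rewrite (hu j Hj), (hu (- j)%Z) by lia. simpl. lra.
  - intros j. unfold vR. cbv beta. rewrite Z.opp_involutive. lra.
  - assert (Hre : sumZR n (fun j => Re (u j)) = 1).
    { transitivity (Re (sumZC n u)); [unfold sumZC, sumZR; rewrite foldC_Re; reflexivity|].
      rewrite hsum. reflexivity. }
    assert (Hre2 : sumZR n (fun j => Re (u (- j)%Z)) = 1)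
      by (rewrite (sumZR_refl n (fun j => Re (u j))); exact Hre).
    transitivity (/2 * (sumZR n (fun j => Re (u j)) + sumZR n (fun j => Re (u (- j)%Z)))).
    + unfold sumZR. rewrite <- foldR_plus, <- foldR_scal. f_equal.
      apply functional_extensionality; intro j. apply functional_extensionality; intro acc.
      unfold vR. field.
    + rewrite Hre, Hre2. field.
  - exact Hr.
Qed.
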